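(* Let $\mathbb{A}=(a_{i_1\ldots i_m})\in T_{m,n}$ be a tensor such that, whenever $a_{i_1\ldots i_m}>0$ and $(i_1,\ldots,i_m)$ is not of the form $(i,\ldots,i)$, we have $a_{i_1\ldots i_m}=a_{i_{\sigma(1)}\ldots i_{\sigma(m)}}$ for every permutation $\sigma$ of $\{1,\ldots,m\}$. (1) If $\mathbb{A}$ is a $B_0$ tensor, then either $\mathbb{A}$ is itself a diagonally dominated $Z$ tensor, or $$\mathbb{A}=\mathbb{M}+\sum_{k=1}^s h_k\mathcal{E}^{J_k},$$ where $\mathbb{M}\in T_{m,n}$ is a diagonally dominated $Z$ tensor, $s$ is a positive integer, $h_k>0$ and $J_k\subseteq[n]$ for $k=1,\ldots,s$, and $J_s\subsetneqq J_{s-1}\subsetneqq\cdots\subsetneqq J_1$. (2) If $\mathbb{A}$ is a $B$ tensor, then either $\mathbb{A}$ is itself a strictly diagonally dominated $Z$ tensor, or $\mathbb{A}$ admits a decomposition as in (1) in which $\mathbb{M}$ is a strictly diagonally dominated $Z$ tensor.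
   Context: $T_{m,n}$ denotes the set of real $m$th order $n$-dimensional tensors $\mathbb{A}=(a_{i_1i_2\ldots i_m})$ with $i_j\in[n]=\{1,\ldots,n\}$. $\mathbb{A}$ is a $Z$ tensor if $a_{i_1\ldots i_m}\le0$ whenever $(i_1,\ldots,i_m)$ is not of the form $(i,\ldots,i)$. $\mathbb{A}$ is diagonally dominated if for all $i\in[n]$, $a_{i\ldots i}\ge\sum\{|a_{ii_2\ldots i_m}|:(i_2,\ldots,i_m)\ne(i,\ldots,i)\}$, and strictly diagonally dominated if this holds with strict inequality for all $i$. $\mathbb{A}$ is a $B$ tensor if for all $i\in[n]$, $\sum_{i_2,\ldots,i_m=1}^n a_{ii_2\ldots i_m}>0$ and $\frac{1}{n^{m-1}}\sum_{i_2,\ldots,i_m=1}^n a_{ii_2\ldots i_m}>a_{ij_2\ldots j_m}$ for all $(j_2,\ldots,j_m)\neq(i,\ldots,i)$; $\mathbb{A}$ is a $B_0$ tensor if the same two conditions hold with $\ge$ in place of $>$. For $J\subseteq[n]$, the partially all one tensor $\mathcal{E}^J\in T_{m,n}$ has entry $1$ at $(i_1,\ldots,i_m)$ if $i_1,\ldots,i_m\in J$ and $0$ otherwise. *)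

(* Defs.v *)
From mathcomp Require Import all_boot all_order all_algebra all_fingroup.
Set Implicit Arguments. Unset Strict Implicit. Unset Printing Implicit Defensive.
Import Order.TTheory GRing.Theory Num.Theory.
Local Open Scope ring_scope.

(* A real m-th order n-dimensional tensor: a function from index tuples
   (i_1,...,i_m), encoded as {ffun 'I_m -> 'I_n} (position k <-> i_{k+1}),
   to R.  (Positions are 0-based: position 0 is i_1.) *)
Definition idx (m n : nat) := {ffun 'I_m -> 'I_n}.
Definition tensor (R : Type) (m n : nat) := idx m n -> R.

Definition diagidx (m n : nat) (i : 'I_n) : idx m n := [ffun _ => i].

Definition offdiag (m n : nat) (f : idx m n) : bool :=
  [forall i : 'I_n, f != diagidx m i].

Definition starts_with (m n : nat) (i : 'I_n) (f : idx m n) : bool :=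
  [forall k : 'I_m, (val k == 0%N) ==> (f k == i)].

Definition permidx (m n : nat) (s : 'S_m) (f : idx m n) : idx m n :=
  [ffun k => f (s k)].

Section Defs.
Variables (R : realFieldType) (m n : nat).

Definition is_Z (A : tensor R m n) : Prop :=
  forall f : idx m n, offdiag f -> A f <= 0.

Definition offrow_abs (A : tensor R m n) (i : 'I_n) : R :=
  \sum_(f : idx m n | starts_with i f && (f != diagidx m i)) `|A f|.

Definition diag_dominated (A : tensor R m n) : Prop :=
  forall i : 'I_n, offrow_abs A i <= A (diagidx m i).

Definition strictly_diag_dominated (A : tensor R m n) : Prop :=
  forall i : 'I_n, offrow_abs A i < A (diagidx m i).

Definition rowsum (A : tensor R m n) (i : 'I_n) : R :=
  \sum_(f : idx m n | starts_with i f) A f.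

Definition is_B (A : tensor R m n) : Prop :=
  forall i : 'I_n,
    0 < rowsum A i /\
    forall f : idx m n, starts_with i f -> f != diagidx m i ->
      rowsum A i / (n ^ m.-1)%:R > A f.

Definition is_B0 (A : tensor R m n) : Prop :=
  forall i : 'I_n,
    0 <= rowsum A i /\
    forall f : idx m n, starts_with i f -> f != diagidx m i ->
      rowsum A i / (n ^ m.-1)%:R >= A f.

Definition all_one (J : {set 'I_n}) : tensor R m n :=
  fun f => if [forall k : 'I_m, f k \in J] then 1 else 0.

Definition pos_offdiag_sym (A : tensor R m n) : Prop :=
  forall f : idx m n, offdiag f -> 0 < A f ->
    forall s : 'S_m, A f = A (permidx s f).

Definition decomposes (P : tensor R m n -> Prop) (A : tensor R m n) : Prop :=
  exists (M : tensor R m n) (s : nat) (h : nat -> R) (J : nat -> {set 'I_n}),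
    [/\ P M, (0 < s)%N,
        (forall k, (1 <= k <= s)%N -> 0 < h k),
        (forall k, (1 <= k < s)%N -> J k.+1 \proper J k) &
        forall f : idx m n,
          A f = M f + \sum_(1 <= k < s.+1) h k * all_one (J k) f].

End Defs.

(* Main.v *)
Require Import Defs.
From mathcomp Require Import all_boot all_order all_algebra all_fingroup.
From mathcomp Require Import zify lra.
From Stdlib Require Import FunctionalExtensionality.
Import Order.TTheory GRing.Theory Num.Theory.
Set Implicit Arguments. Unset Strict Implicit. Unset Printing Implicit Defensive.
Local Open Scope ring_scope.

Definition supp (R : realFieldType) n (w : 'I_n -> R) : {set 'I_n} := [set j | 0 < w j].

Definition Ssum (R : realFieldType) m n (s : nat) (h : nat -> R) (J : nat -> {set 'I_n})
  (f : idx m n) : R := \sum_(1 <= k < s.+1) h k * all_one R (J k) f.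
Arguments Ssum {R m n} s h J f.

Definition decomp_prop (R : realFieldType) (m n : nat) (w : 'I_n -> R) :=
  exists (s : nat) (h : nat -> R) (J : nat -> {set 'I_n}), [/\ (forall k, (1 <= k <= s)%N -> 0 < h k),
     (forall k, (1 <= k < s)%N -> J k.+1 \proper J k),
     (forall k, (1 <= k <= s)%N -> J k \subset supp w) &
     forall f : idx m n, (forall l, Ssum s h J f <= w (f l)) /\
        (forall c, (forall l, c <= w (f l)) -> c <= Ssum s h J f)].
Arguments decomp_prop {R} m {n} w.

Lemma decomp_zero (R : realFieldType) m n (k0 : 'I_m) (w : 'I_n -> R) :
  (forall j, w j = 0) -> decomp_prop m w.
Proof.
move=> w0; exists 0%N, (fun _ => 0), (fun _ => set0); split => //.
- by move=> k; lia.
- by move=> k; lia.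
- by move=> k; lia.
- move=> f; rewrite /Ssum big_geq //; split=> [l|c /(_ k0)]; by rewrite w0.
Qed.

Lemma decomp (R : realFieldType) m n (k0 : 'I_m) : forall N (w : 'I_n -> R),
  (#|supp w| <= N)%N -> (forall j, 0 <= w j) -> decomp_prop m w.
Proof.
elim=> [|N IH] w hN w0.
  apply: (decomp_zero k0) => j; apply/eqP; rewrite eq_le w0 andbT.
  rewrite leNgt; apply/negP => hj.
  have : j \in supp w by rewrite inE.
  by move: hN; rewrite leqn0 => /eqP/cards0_eq ->; rewrite inE.
have [/eqP e0|] := boolP (supp w == set0).
  apply: (decomp_zero k0) => j; apply/eqP; rewrite eq_le w0 andbT.
  rewrite leNgt; apply/negP => hj.
  have : j \in supp w by rewrite inE.
  by rewrite e0 inE.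
case/set0Pn => j1 hj1.
have hj1' : 0 < w j1 by move: hj1; rewrite inE.
case: (@arg_minP _ _ _ j1 (fun j => 0 < w j) w hj1') => j0 hj0 hmin.
set v := w j0.
pose w' j := if 0 < w j then w j - v else 0.
have w'0 : forall j, 0 <= w' j.
  move=> j; rewrite /w'; case: ifP => // hj; rewrite subr_ge0; exact: hmin.
have sub' : supp w' \subset supp w.
  apply/subsetP => j; rewrite !inE /w'; case: ifP => //; by rewrite ltxx.
have j0n : j0 \notin supp w' by rewrite inE /w' hj0 subrr ltxx.
have j0s : j0 \in supp w by rewrite inE.
have prop' : supp w' \proper supp w.
  by apply/properP; split => //; exists j0.
have card' : (#|supp w'| <= N)%N.
  by have := proper_card prop'; lia.
have [s' [h' [J' [hpos hch hsub hS]]]] := IH w' card' w'0.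
exists s'.+1, (fun k => if k == 1%N then v else h' k.-1),
  (fun k => if k == 1%N then supp w else J' k.-1).
have hSeq : forall f : idx m n, Ssum s'.+1 (fun k => if k == 1%N then v else h' k.-1)
  (fun k => if k == 1%N then supp w else J' k.-1) f =
  v * all_one R (supp w) f + Ssum s' h' J' f.
  move=> f; rewrite /Ssum; rewrite (@big_nat_recl _ _ _ s'.+1 1%N) //=; congr (_ + _).
  apply: eq_big_nat => k /andP [hk _].
  have -> : (k.+1 == 1%N) = false by apply/eqP; lia.
  by [].
split.
- move=> k hk; case: eqP => [_|hk1]; first exact: hj0.
  apply: hpos; lia.
- move=> k hk /=.
  have -> : (k.+1 == 1%N) = false by apply/eqP; lia.
  have [->|hk1] := eqVneq k 1%N.
    apply: sub_proper_trans prop'; apply: hsub; lia.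
  have := hch k.-1; rewrite prednK; last by lia.
  move=> -> //; lia.
- move=> k hk; case: eqP => [_|hk1] //.
  apply: subset_trans sub'; apply: hsub; lia.
move=> f; rewrite hSeq; have [hS1 hS2] := hS f.
rewrite /all_one; case: ifP => hall.
  have inS : forall l, 0 < w (f l).
    by move=> l; move/forallP: hall => /(_ l); rewrite inE.
  split.
    move=> l; have := hS1 l; rewrite /w' inS; lra.
  move=> c hc; have := hS2 (c - v); rewrite /w'.
  move=> H; suff : c - v <= Ssum s' h' J' f by lra.
  apply: H => l; rewrite inS; have := hc l; lra.
move/negbT: hall; rewrite negb_forall => /existsP [l1 hl1].
have wl1 : w (f l1) = 0.
  apply/eqP; rewrite eq_le w0 andbT leNgt; apply/negP => h; move: hl1.
  by rewrite inE h.
have w'l1 : w' (f l1) = 0 by rewrite /w' wl1 ltxx.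
rewrite mulr0 add0r; split.
  move=> l; have := hS1 l1; rewrite w'l1 => h; apply: le_trans h (w0 _).
move=> c hc; have := hc l1; rewrite wl1 => hc0.
apply: le_trans hc0 _; apply: hS2 => l; exact: w'0.
Qed.

Lemma sw0 m n (i : 'I_n) (f : idx m.+1 n) : starts_with i f = (f ord0 == i).
Proof.
apply/forallP/eqP => [H|H k]; first by have /implyP/(_ isT)/eqP := H ord0.
apply/implyP => /eqP hk; have -> : k = ord0 by apply/val_inj.
by rewrite H.
Qed.

Lemma card_sw m n (i : 'I_n) : #|[pred f : idx m.+1 n | starts_with i f]| = (n ^ m)%N.
Proof.
pose F := fun k : 'I_m.+1 => if k == ord0 then pred1 i else predT.
have -> : #|[pred f : idx m.+1 n | starts_with i f]| = #|(family F : simpl_pred (idx m.+1 n))|.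
  apply: eq_card => f; rewrite !inE sw0; apply/eqP/familyP => [H k|H].
    by rewrite /F; case: eqP => [->|_] //=; rewrite inE H.
  by have := H ord0; rewrite /F eqxx inE => /eqP.
rewrite card_family foldrE big_map big_enum /= big_ord_recl /F eqxx card1 mul1n.
rewrite (eq_bigr (fun _ => n)); first by rewrite prod_nat_const card_ord.
by move=> k _; rewrite eq_sym (negbTE (neq_lift _ _)) card_ord.
Qed.

Lemma perm_start m n (f : idx m.+1 n) (l : 'I_m.+1) :
  let g := permidx (tperm ord0 l) f in
  g ord0 = f l /\ (offdiag f -> offdiag g).
Proof.
move=> g; split; first by rewrite /g /permidx ffunE tpermL.
move=> /forallP hf; apply/forallP => j; apply/negP => /eqP hg.
have /eqP := hf j; apply; apply/ffunP => k.
have := congr1 (fun h : idx m.+1 n => h (tperm ord0 l k)) hg.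
by rewrite /g /permidx /diagidx !ffunE tpermK.
Qed.

Lemma aux4 (R : realFieldType) (x y a b : R) : b - a - (x - y) = b + y - (a + x).
Proof. by lra. Qed.

Lemma core (R : realFieldType) m n (A : tensor R m.+1 n) (hsym : pos_offdiag_sym A) (strict : bool)
  (H0 : forall i, 0 <= rowsum A i)
  (H1 : forall i f, starts_with i f -> f != diagidx m.+1 i -> A f <= rowsum A i / (n ^ m)%:R)
  (Hs : strict -> forall i, 0 < rowsum A i /\ forall f, starts_with i f -> f != diagidx m.+1 i ->
        A f < rowsum A i / (n ^ m)%:R) :
  exists (s : nat) (h : nat -> R) (J : nat -> {set 'I_n}),
    [/\ (forall k, (1 <= k <= s)%N -> 0 < h k), (forall k, (1 <= k < s)%N -> J k.+1 \proper J k),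
     is_Z (fun f => A f - Ssum s h J f),
     (forall i, offrow_abs (fun f => A f - Ssum s h J f) i <= A (diagidx m.+1 i) - Ssum s h J (diagidx m.+1 i)) &
     (strict -> forall i, offrow_abs (fun f => A f - Ssum s h J f) i < A (diagidx m.+1 i) - Ssum s h J (diagidx m.+1 i))].
Proof.
pose w i := \big[Num.max/0]_(f | starts_with i f && offdiag f) A f.
have w0 : forall i, 0 <= w i by move=> i; exact: bigmax_ge_id.
have wA : forall (i : 'I_n) (f : idx m.+1 n), starts_with i f -> offdiag f -> A f <= w i.
  by move=> i f hs ho; apply: le_bigmax_cond; rewrite hs ho.
have offd : forall (i : 'I_n) (f : idx m.+1 n), starts_with i f -> f != diagidx m.+1 i -> offdiag f.
  move=> i f; rewrite sw0 => /eqP hi hd; apply/forallP => j; apply/eqP => hj.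
  move: hd; rewrite hj; apply/negP; rewrite negbK; apply/eqP; congr diagidx.
  by move: hi; rewrite hj /diagidx ffunE.
have Npos : forall i : 'I_n, 0 < (n ^ m)%:R :> R.
  by move=> i; rewrite ltr0n expn_gt0; apply/orP; left; apply: leq_ltn_trans (ltn_ord i).
have wle : forall i, w i * (n ^ m)%:R <= rowsum A i.
  move=> i; rewrite -[X in _ <= X](divfK (lt0r_neq0 (Npos i))).
  apply: ler_wpM2r; first exact: ltW (Npos i).
  apply: bigmax_le; first by apply: divr_ge0 => //; exact: ltW (Npos i).
  move=> f /andP [hs ho]; apply: H1 => //; move/forallP: ho; exact.
have wlt : strict -> forall i, w i * (n ^ m)%:R < rowsum A i.
  move=> hst i; have [Hp Hf] := Hs hst i.
  rewrite -[X in _ < X](divfK (lt0r_neq0 (Npos i))) ltr_pM2r; last exact: Npos.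
  apply: bigmax_lt; first exact: divr_gt0 Hp (Npos i).
  move=> f /andP [hs ho]; apply: Hf => //; move/forallP: ho; exact.
have [s [h [J [hpos hch hsub hS]]]] := decomp (ord0 : 'I_m.+1) (leqnn #|supp w|) w0.
exists s, h, J.
set S := Ssum s h J.
have S0 : forall f, 0 <= S f by move=> f; apply: (hS f).2 => l; exact: w0.
have Sle : forall (i : 'I_n) (f : idx m.+1 n), starts_with i f -> S f <= w i.
  by move=> i f; rewrite sw0 => /eqP <-; exact: (hS f).1.
have HZ : is_Z (fun f => A f - S f).
  move=> f hf /=; rewrite subr_le0; case: (leP (A f) 0) => hA.
    exact: le_trans hA (S0 f).
  apply: (hS f).2 => l; have [g0 gof] := perm_start f l.
  rewrite (hsym f hf hA (tperm ord0 l)); apply: wA; last exact: gof.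
  by rewrite sw0 g0.
have key : forall i, (A (diagidx m.+1 i) - S (diagidx m.+1 i)) - offrow_abs (fun f => A f - S f) i
    = rowsum A i - \sum_(f | starts_with i f) S f.
  move=> i; have hd : starts_with i (diagidx m.+1 i) by rewrite sw0 /diagidx ffunE.
  rewrite /offrow_abs (eq_bigr (fun f => S f - A f)); last first.
    move=> f /andP [hs hne]; rewrite ler0_norm ?opprB //; exact: HZ (offd _ _ hs hne).
  rewrite sumrB /rowsum 2!(bigD1 (diagidx m.+1 i) hd) /=.
  move: (\sum_(f | starts_with i f && (f != diagidx m.+1 i)) S f) (\sum_(f | starts_with i f && (f != diagidx m.+1 i)) A f) (S (diagidx m.+1 i)) (A (diagidx m.+1 i)) => x y a b; exact: aux4.
have sumS : forall i, \sum_(f | starts_with i f) S f <= w i * (n ^ m)%:R.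
  move=> i; apply: le_trans (_ : \sum_(f : idx m.+1 n | starts_with i f) w i <= _).
    by apply: ler_sum => f hf; exact: Sle.
  have -> : \sum_(f : idx m.+1 n | starts_with i f) w i = \sum_(f in [pred f : idx m.+1 n | starts_with i f]) w i.
    by apply: eq_bigl.
  by rewrite sumr_const card_sw mulr_natr.
split => //.
- move=> i; rewrite -subr_ge0 key subr_ge0; exact: le_trans (sumS i) (wle i).
- move=> hst i; rewrite -subr_gt0 key subr_gt0; exact: le_lt_trans (sumS i) (wlt hst i).
Qed.

Lemma finish (R : realFieldType) m n (P : tensor R m n -> Prop) (A : tensor R m n) (s : nat) (h : nat -> R) (J : nat -> {set 'I_n}) :
  (forall k, (1 <= k <= s)%N -> 0 < h k) -> (forall k, (1 <= k < s)%N -> J k.+1 \proper J k) ->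
  P (fun f => A f - Ssum s h J f) -> P A \/ decomposes P A.
Proof.
case: s => [|s] hpos hch HP.
  left; have <- : (fun f => A f - Ssum 0 h J f) = A; last exact: HP.
  by apply: FunctionalExtensionality.functional_extensionality => f; rewrite /Ssum big_geq // subr0.
right; exists (fun f => A f - Ssum s.+1 h J f), s.+1, h, J; split => //.
by move=> f; rewrite /Ssum subrK.
Qed.

Theorem theorem4p3 (R : realFieldType) (m n : nat) (hm : (2 <= m)%N)
    (A : tensor R m n) (hsym : pos_offdiag_sym A) :
  (is_B0 A ->
     (is_Z A /\ diag_dominated A) \/
     decomposes (fun M => is_Z M /\ diag_dominated M) A) /\
  (is_B A ->
     (is_Z A /\ strictly_diag_dominated A) \/
     decomposes (fun M => is_Z M /\ strictly_diag_dominated M) A).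
Proof.
case: m hm A hsym => [//|m] hm A hsym.
split => hB.
  have [s [h [J [hp hc hZ hD _]]]] := @core R m n A hsym false (fun i => (hB i).1)
     (fun i => (hB i).2) (fun b => match b with end).
  by apply: (finish hp hc); split.
have [s [h [J [hp hc hZ _ hD]]]] := @core R m n A hsym true (fun i => ltW (hB i).1)
     (fun i f hs hne => ltW ((hB i).2 f hs hne)) (fun _ => hB).
by apply: (finish hp hc); split => //; exact: hD.
Qed.
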